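(* Let $-\infty<a<b<\infty$, $K\in\mathbb{R}$, $g\in C^1(\mathbb{R})$, and let $f(x,u,p)=(p-K)^2+g(u)$ for $(x,u,p)\in[a,b]\times\mathbb{R}\times\mathbb{R}$, with $\Phi(u)=\int_a^b f(x,u(x),u'(x))\,dx$ for $u\in C^1([a,b])$. Let $I^{D}_a,I^{D}_b\subset\{1\}$ be arbitrary, let $u^0\in C^1([a,b])$, and let $\mathcal{M}=u^0+C^1_{D}$. If $u^0$ is a weak minimizer of $\Phi$ in $\mathcal{M}$, then $u^0$ is a strong minimizer of $\Phi$ in $\mathcal{M}$.
   Context: Here $N=1$ and $C^1_{D}=\{v\in C^1([a,b]): v(a)=0 \text{ if } 1\in I^{D}_a,\ v(b)=0 \text{ if } 1\in I^{D}_b\}$ (so at each endpoint the value is either fixed to that of $u^0$ or free). A function $w\in\mathcal{M}$ is a weak (resp. strong) minimizer of $\Phi$ in $\mathcal{M}$ if there is $\varepsilon>0$ such that $\Phi(v)\ge\Phi(w)$ for all $v\in\mathcal{M}$ with $\|v-w\|_{C^1}<\varepsilon$ (resp. $\|v-w\|_{C}<\varepsilon$), where $\|v\|_{C^1}=\max|v|+\max|v'|$ and $\|v\|_C=\max|v|$ over $[a,b]$. *)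

(* Defs.v *)
From Stdlib Require Import Reals.
From Coquelicot Require Import Coquelicot.
Open Scope R_scope.

(* u is C^1 on [a,b]: differentiable at every point of [a,b] (functions are
   represented by real functions on R; only their values on [a,b] matter),
   with derivative continuous on [a,b] (relative to [a,b]). *)
Definition C1_on (a b : R) (u : R -> R) : Prop :=
  (forall x, a <= x <= b -> ex_derive u x) /\
  (forall x, a <= x <= b -> forall eps, 0 < eps ->
     exists delta, 0 < delta /\
       forall y, a <= y <= b -> Rabs (y - x) < delta ->
         Rabs (Derive u y - Derive u x) < eps).

Definition C1_R (g : R -> R) : Prop :=
  (forall x, ex_derive g x) /\ (forall x, continuous (Derive g) x).

Definition Phi (a b K : R) (g : R -> R) (u : R -> R) : R :=
  RInt (fun x => (Derive u x - K) ^ 2 + g (u x)) a b.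

(* M = u0 + C^1_D : Da (resp. Db) means 1 \in I^D_a (resp. I^D_b). *)
Definition in_M (a b : R) (Da Db : bool) (u0 v : R -> R) : Prop :=
  C1_on a b v /\
  (Da = true -> v a = u0 a) /\ (Db = true -> v b = u0 b).

Definition distC_lt (a b : R) (v w : R -> R) (eps : R) : Prop :=
  exists m, m < eps /\ forall x, a <= x <= b -> Rabs (v x - w x) <= m.

Definition distC1_lt (a b : R) (v w : R -> R) (eps : R) : Prop :=
  exists m1 m2, m1 + m2 < eps /\
    (forall x, a <= x <= b -> Rabs (v x - w x) <= m1) /\
    (forall x, a <= x <= b -> Rabs (Derive v x - Derive w x) <= m2).

Definition weak_minimizer (a b K : R) (g : R -> R) (Da Db : bool) (w : R -> R)
  (u0 : R -> R) : Prop :=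
  in_M a b Da Db u0 w /\
  exists eps, 0 < eps /\ forall v, in_M a b Da Db u0 v ->
    distC1_lt a b v w eps -> Phi a b K g w <= Phi a b K g v.

Definition strong_minimizer (a b K : R) (g : R -> R) (Da Db : bool) (w : R -> R)
  (u0 : R -> R) : Prop :=
  in_M a b Da Db u0 w /\
  exists eps, 0 < eps /\ forall v, in_M a b Da Db u0 v ->
    distC_lt a b v w eps -> Phi a b K g w <= Phi a b K g v.

(* Main.v *)
Require Import Defs.
From Stdlib Require Import Reals Lra FunctionalExtensionality.
From Coquelicot Require Import Coquelicot.
Open Scope R_scope.

Lemma cont_eps (f : R -> R) x :
  (forall eps, 0 < eps -> exists d, 0 < d /\ forall y, Rabs (y - x) < d -> Rabs (f y - f x) < eps) ->
  continuous f x.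
Proof.
  intros H. apply (proj1 (continuity_pt_filterlim f x)).
  intros eps Heps. destruct (H eps Heps) as [d [Hd Hy]].
  exists d. split; [lra|]. intros y [_ Hy']. apply Hy. exact Hy'.
Qed.

Lemma cont_pt (f : R -> R) x : continuous f x -> continuity_pt f x.
Proof. intros H. apply (proj2 (continuity_pt_filterlim f x)). exact H. Qed.

Lemma cont_lip (f : R -> R) x c : 0 < c ->
  (forall y, Rabs (f y - f x) <= c * Rabs (y - x)) -> continuous f x.
Proof.
  intros Hc H. apply cont_eps. intros eps He. exists (eps / c). split.
  - apply Rdiv_lt_0_compat; lra.
  - intros y Hy. eapply Rle_lt_trans. apply H.
    apply Rmult_lt_compat_l with (r := c) in Hy; [|lra].
    replace (c * (eps / c)) with eps in Hy by (field; lra). lra.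
Qed.

Lemma c_plus (f g : R -> R) x : continuous f x -> continuous g x -> continuous (fun y => f y + g y) x.
Proof. intros; apply (continuous_plus f g); auto. Qed.
Lemma c_minus (f g : R -> R) x : continuous f x -> continuous g x -> continuous (fun y => f y - g y) x.
Proof. intros; apply (continuous_minus f g); auto. Qed.
Lemma c_mult (f g : R -> R) x : continuous f x -> continuous g x -> continuous (fun y => f y * g y) x.
Proof. intros; apply (continuous_mult f g); auto. Qed.
Lemma c_const (c : R) x : continuous (fun _ : R => c) x.
Proof. apply continuous_const. Qed.
Lemma c_id x : continuous (fun y : R => y) x.
Proof. apply continuous_id. Qed.
Lemma c_comp (f F : R -> R) x : continuous f x -> continuous F (f x) -> continuous (fun y => F (f y)) x.
Proof. intros; apply (continuous_comp f F); auto. Qed.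
Lemma c_sq (f : R -> R) x : continuous f x -> continuous (fun y => f y ^ 2) x.
Proof.
  intros H. apply continuous_ext with (f := fun y => f y * f y).
  intros y. simpl. ring. apply c_mult; auto.
Qed.
Lemma c_abs (f : R -> R) x : continuous f x -> continuous (fun y => Rabs (f y)) x.
Proof. intros; apply continuous_Rabs_comp; auto. Qed.

Definition clamp (a b x : R) := Rmax a (Rmin b x).
Definition Dc (a b : R) (u : R -> R) (x : R) := Derive u (clamp a b x).

Lemma clamp_in a b x : a <= b -> a <= clamp a b x <= b.
Proof. intros. unfold clamp, Rmax, Rmin. repeat destruct Rle_dec; lra. Qed.
Lemma clamp_id a b x : a <= x <= b -> clamp a b x = x.
Proof. intros. unfold clamp, Rmax, Rmin. repeat destruct Rle_dec; lra. Qed.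
Lemma clamp_lip a b x y : a <= b -> Rabs (clamp a b y - clamp a b x) <= Rabs (y - x).
Proof. intros. unfold clamp, Rmax, Rmin. repeat destruct Rle_dec; unfold Rabs; repeat destruct Rcase_abs; lra. Qed.

Lemma Dc_cont a b u x : a <= b -> C1_on a b u -> continuous (Dc a b u) x.
Proof.
  intros Hab [_ Hc]. apply cont_eps. intros eps He.
  destruct (Hc (clamp a b x) (clamp_in a b x Hab) eps He) as [d [Hd H]].
  exists d. split; auto. intros y Hy. unfold Dc. apply H. apply clamp_in; auto.
  eapply Rle_lt_trans. apply clamp_lip; auto. auto.
Qed.

Lemma Dc_id a b u x : a <= x <= b -> Dc a b u x = Derive u x.
Proof. intros. unfold Dc. rewrite clamp_id; auto. Qed.

Lemma C1_cont a b u x : C1_on a b u -> a <= x <= b -> continuous u x.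
Proof. intros [H _] Hx. apply (ex_derive_continuous (V:=R_NormedModule)). auto. Qed.

Lemma exR (f : R -> R) a b : a <= b -> (forall x, a <= x <= b -> continuous f x) -> ex_RInt f a b.
Proof.
  intros Hab H. apply (ex_RInt_continuous (V:=R_CompleteNormedModule)). intros z. rewrite Rmin_left, Rmax_right; auto.
Qed.

Lemma RI_plus (f g : R -> R) a b : ex_RInt f a b -> ex_RInt g a b ->
  RInt (fun x => f x + g x) a b = RInt f a b + RInt g a b.
Proof. intros; apply (RInt_plus f g); auto. Qed.
Lemma RI_minus (f g : R -> R) a b : ex_RInt f a b -> ex_RInt g a b ->
  RInt (fun x => f x - g x) a b = RInt f a b - RInt g a b.
Proof. intros; apply (RInt_minus f g); auto. Qed.
Lemma RI_scal (f : R -> R) a b c : ex_RInt f a b ->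
  RInt (fun x => c * f x) a b = c * RInt f a b.
Proof. intros; apply (RInt_scal f); auto. Qed.
Lemma RI_const a b c : RInt (fun _ => c) a b = (b - a) * c.
Proof. rewrite RInt_const. reflexivity. Qed.

Lemma RI_le (f g : R -> R) a b : a <= b -> ex_RInt f a b -> ex_RInt g a b ->
  (forall x, a <= x <= b -> f x <= g x) -> RInt f a b <= RInt g a b.
Proof. intros. apply RInt_le; auto. intros x Hx. apply H2. lra. Qed.

Lemma RI_ext (f g : R -> R) a b : a <= b -> (forall x, a <= x <= b -> f x = g x) ->
  RInt f a b = RInt g a b.
Proof. intros. apply RInt_ext. rewrite Rmin_left, Rmax_right; auto. intros x Hx. apply H0. lra. Qed.

Lemma RI_upper (f : R -> R) a x b : a <= x <= b -> ex_RInt f a b ->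
  (forall y, a <= y <= b -> 0 <= f y) -> RInt f a x <= RInt f a b.
Proof.
  intros Hx He Hp.
  assert (H1 : ex_RInt f a x) by (apply (ex_RInt_Chasles_1 (V:=R_CompleteNormedModule)) with b; auto).
  assert (H2 : ex_RInt f x b) by (apply (ex_RInt_Chasles_2 (V:=R_CompleteNormedModule)) with a; auto).
  rewrite <- (RInt_Chasles (V:=R_CompleteNormedModule) f a x b H1 H2).
  assert (0 <= RInt f x b). { apply RInt_ge_0; try lra; auto. intros; apply Hp; lra. }
  change (plus (RInt f a x) (RInt f x b)) with (RInt f a x + RInt f x b). lra.
Qed.

Lemma RI_abs_le (f : R -> R) a b : a <= b -> ex_RInt f a b ->
  Rabs (RInt f a b) <= RInt (fun t => Rabs (f t)) a b.
Proof. intros; apply abs_RInt_le; auto. Qed.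

Lemma bnd (f : R -> R) a b : a <= b -> (forall x, a <= x <= b -> continuous f x) ->
  exists B, 0 < B /\ forall x, a <= x <= b -> Rabs (f x) <= B.
Proof.
  intros Hab H.
  destruct (continuity_ab_maj (fun x => Rabs (f x)) a b Hab) as [M [HM _]].
  { intros c Hc. apply cont_pt. apply c_abs. auto. }
  exists (Rabs (f M) + 1). split. pose proof (Rabs_pos (f M)); lra.
  intros x Hx. pose proof (HM x Hx). simpl in H0. lra.
Qed.

Lemma Phi_c a b K g u : a <= b ->
  Phi a b K g u = RInt (fun x => (Dc a b u x - K) ^ 2 + g (u x)) a b.
Proof.
  intros Hab. unfold Phi. apply RI_ext; auto. intros x Hx. rewrite Dc_id; auto.
Qed.

Lemma C1_plus a b u w : C1_on a b u -> C1_on a b w -> C1_on a b (fun x => u x + w x).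
Proof.
  intros [Hu Hcu] [Hw Hcw]. split.
  - intros x Hx. apply (ex_derive_plus u w); auto.
  - intros x Hx eps He.
    destruct (Hcu x Hx (eps/2)) as [d1 [Hd1 H1]]; [lra|].
    destruct (Hcw x Hx (eps/2)) as [d2 [Hd2 H2]]; [lra|].
    exists (Rmin d1 d2). split. apply Rmin_pos; auto.
    intros y Hy Hyx.
    rewrite (Derive_plus u w y) by auto. rewrite (Derive_plus u w x) by auto.
    assert (Rabs (y - x) < d1) by (eapply Rlt_le_trans; [exact Hyx| apply Rmin_l]).
    assert (Rabs (y - x) < d2) by (eapply Rlt_le_trans; [exact Hyx| apply Rmin_r]).
    specialize (H1 y Hy H). specialize (H2 y Hy H0).
    replace (Derive u y + Derive w y - (Derive u x + Derive w x)) with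
      ((Derive u y - Derive u x) + (Derive w y - Derive w x)) by ring.
    eapply Rle_lt_trans. apply Rabs_triang. lra.
Qed.

Lemma C1_scal a b w t : C1_on a b w -> C1_on a b (fun x => t * w x).
Proof.
  intros [Hw Hcw]. split.
  - intros x Hx. apply ex_derive_scal; auto.
  - intros x Hx eps He.
    destruct (Hcw x Hx (eps / (Rabs t + 1))) as [d [Hd H]].
    { apply Rdiv_lt_0_compat; [lra|]. pose proof (Rabs_pos t); lra. }
    exists d. split; auto. intros y Hy Hyx.
    rewrite !Derive_scal.
    replace (t * Derive w y - t * Derive w x) with (t * (Derive w y - Derive w x)) by ring.
    rewrite Rabs_mult. specialize (H y Hy Hyx).
    pose proof (Rabs_pos t).
    apply Rle_lt_trans with ((Rabs t + 1) * Rabs (Derive w y - Derive w x)).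
    { apply Rmult_le_compat_r. apply Rabs_pos. lra. }
    apply Rmult_lt_compat_l with (r := Rabs t + 1) in H; [|lra].
    replace ((Rabs t + 1) * (eps / (Rabs t + 1))) with eps in H by (field; lra). lra.
Qed.

Lemma C1_ext a b u w : C1_on a b u -> (forall x, u x = w x) -> C1_on a b w.
Proof.
  intros [Hu Hc] E. assert (Ew : w = u) by (apply functional_extensionality; intros; auto).
  subst. split; auto.
Qed.

Lemma C1_minus a b u w : C1_on a b u -> C1_on a b w -> C1_on a b (fun x => u x - w x).
Proof.
  intros Hu Hw. apply C1_ext with (fun x => u x + (-1) * w x).
  apply C1_plus; auto. apply C1_scal; auto. intros; ring.
Qed.

Lemma C1_glob a b F f : (forall x, is_derive F x (f x)) -> (forall x, continuous f x) -> C1_on a b F.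
Proof.
  intros HF Hf. split.
  - intros x _. exists (f x). auto.
  - intros x Hx eps He.
    pose proof (proj2 (continuity_pt_filterlim f x) (Hf x) eps He) as [d [Hd H]].
    exists d. split; auto. intros y Hy Hyx.
    rewrite (is_derive_unique F y (f y)) by auto. rewrite (is_derive_unique F x (f x)) by auto.
    destruct (Req_dec x y) as [<-|Hne]. rewrite Rminus_diag, Rabs_R0; lra.
    apply H. split; auto. split. exact I. exact Hne.
Qed.

Lemma D_plus a b u w x : C1_on a b u -> C1_on a b w -> a <= x <= b ->
  Derive (fun y => u y + w y) x = Derive u x + Derive w x.
Proof. intros [Hu _] [Hw _] Hx. apply (Derive_plus u w); auto. Qed.
Lemma D_minus a b u w x : C1_on a b u -> C1_on a b w -> a <= x <= b ->
  Derive (fun y => u y - w y) x = Derive u x - Derive w x.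
Proof. intros [Hu _] [Hw _] Hx. apply (Derive_minus u w); auto. Qed.

Lemma UC a b g u0 : a <= b -> C1_R g -> C1_on a b u0 -> forall eta, 0 < eta ->
  exists d, 0 < d /\ forall x y, a <= x <= b -> Rabs (y - u0 x) <= d ->
    Rabs (Derive g y - Derive g (u0 x)) <= eta.
Proof.
  intros Hab [Hgd Hgc] Hu eta He.
  destruct (bnd u0 a b Hab) as [Bu [HBu0 HBu]]. { intros; apply (C1_cont a b); auto. }
  destruct (Heine_cor2 (f := Derive g) (a := - Bu - 1) (b := Bu + 1)
     (fun x _ => cont_pt _ _ (Hgc x)) (mkposreal eta He)) as [[del Hdel] Hd].
  simpl in Hd.
  exists (Rmin (del/2) (1/2)). split. apply Rmin_pos; lra.
  intros x y Hx Hy.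
  assert (Hm1 : Rmin (del/2) (1/2) <= del/2) by apply Rmin_l.
  assert (Hm2 : Rmin (del/2) (1/2) <= 1/2) by apply Rmin_r.
  specialize (HBu x Hx).
  apply Rlt_le. apply Hd.
  - revert Hy HBu. unfold Rabs; repeat destruct Rcase_abs; intros; lra.
  - revert HBu. unfold Rabs; repeat destruct Rcase_abs; intros; lra.
  - lra.
Qed.

Lemma taylor g eta p y1 y2 d : C1_R g ->
  (forall z, Rabs (z - p) <= d -> Rabs (Derive g z - Derive g p) <= eta) ->
  Rabs (y1 - p) <= d -> Rabs (y2 - p) <= d ->
  Rabs (g y1 - g y2 - Derive g p * (y1 - y2)) <= eta * Rabs (y1 - y2).
Proof.
  intros [Hgd Hgc] H H1 H2.
  destruct (MVT_gen g y2 y1 (Derive g)) as [c [Hc E]].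
  { intros x _. apply Derive_correct. auto. }
  { intros x _. apply cont_pt. apply (ex_derive_continuous (V:=R_NormedModule)). auto. }
  rewrite E.
  replace (Derive g c * (y1 - y2) - Derive g p * (y1 - y2)) with
    ((Derive g c - Derive g p) * (y1 - y2)) by ring.
  rewrite Rabs_mult. apply Rmult_le_compat_r. apply Rabs_pos.
  apply H. revert Hc H1 H2. unfold Rmin, Rmax. repeat destruct Rle_dec; unfold Rabs; repeat destruct Rcase_abs; intros; lra.
Qed.

Lemma zero_lemma A Q tau0 (F : R -> R) : 0 < tau0 -> 0 <= Q ->
  (forall t, Rabs t < tau0 -> 0 <= F t) ->
  (forall t, Rabs t < tau0 -> F t <= t * A + t^2 * Q + Rabs t * (Rabs A / 2)) -> A = 0.
Proof.
  intros Ht0 HQ H1 H2. destruct (Req_dec A 0) as [|HA]; auto. exfalso.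
  assert (HAp : 0 < Rabs A) by (apply Rabs_pos_lt; auto).
  set (tau := Rmin (tau0/2) (Rabs A / (4*(Q+1)))).
  assert (Htp : 0 < tau) by (apply Rmin_pos; [lra| apply Rdiv_lt_0_compat; lra]).
  assert (Ht1 : tau <= tau0/2) by apply Rmin_l.
  assert (Ht2 : tau <= Rabs A / (4*(Q+1))) by apply Rmin_r.
  assert (Ht3 : tau * (4*(Q+1)) <= Rabs A).
  { apply Rmult_le_compat_r with (r := 4*(Q+1)) in Ht2; [|lra].
    replace (Rabs A / (4 * (Q + 1)) * (4 * (Q + 1))) with (Rabs A) in Ht2 by (field; lra). lra. }
  assert (HtQ : tau * tau * Q <= tau * Rabs A / 4).
  { assert (tau * Q <= Rabs A / 4) by nra. nra. }
  destruct (Rlt_dec 0 A) as [Apos|Aneg].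
  - assert (Hab : Rabs (- tau) < tau0) by (rewrite Rabs_Ropp, Rabs_pos_eq; lra).
    specialize (H1 _ Hab). specialize (H2 _ Hab).
    rewrite Rabs_Ropp, Rabs_pos_eq in H2 by lra. rewrite Rabs_pos_eq in H2, HtQ by lra.
    simpl in H2. nra.
  - assert (Hab : Rabs tau < tau0) by (rewrite Rabs_pos_eq; lra).
    specialize (H1 _ Hab). specialize (H2 _ Hab).
    rewrite Rabs_pos_eq in H2 by lra. rewrite Rabs_left in H2, HtQ by lra.
    simpl in H2. nra.
Qed.

Lemma cg g x : C1_R g -> continuous g x.
Proof. intros [H _]. apply (ex_derive_continuous (V:=R_NormedModule)). auto. Qed.
Lemma cg' g x : C1_R g -> continuous (Derive g) x.
Proof. intros [_ H]. auto. Qed.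

Lemma Dc_plus_scal a b u w t x : a <= b -> C1_on a b u -> C1_on a b w ->
  Dc a b (fun y => u y + t * w y) x = Dc a b u x + t * Dc a b w x.
Proof.
  intros Hab Hu Hw. unfold Dc. rewrite (D_plus a b u (fun y => t * w y)); auto.
  rewrite Derive_scal. auto. apply C1_scal; auto. apply clamp_in; auto.
Qed.

Lemma FV a b K g u0 Da Db eps0 :
  a < b -> C1_R g -> C1_on a b u0 -> 0 < eps0 ->
  (forall v, in_M a b Da Db u0 v -> distC1_lt a b v u0 eps0 -> Phi a b K g u0 <= Phi a b K g v) ->
  forall phi, C1_on a b phi -> (Da = true -> phi a = 0) -> (Db = true -> phi b = 0) ->
  RInt (fun x => 2 * (Dc a b u0 x - K) * Dc a b phi x + Derive g (u0 x) * phi x) a b = 0.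
Proof.
  intros Hab Hg Hu He0 Hw phi Hp Hpa Hpb.
  assert (Hab' : a <= b) by lra.
  set (A := RInt (fun x => 2 * (Dc a b u0 x - K) * Dc a b phi x + Derive g (u0 x) * phi x) a b).
  set (Q := RInt (fun x => Dc a b phi x ^ 2) a b).
  destruct (bnd phi a b Hab') as [Bp [HBp0 HBp]]. { intros; apply (C1_cont a b); auto. }
  destruct (bnd (Dc a b phi) a b Hab') as [Bd [HBd0 HBd]]. { intros; apply Dc_cont; auto. }
  assert (HQ : 0 <= Q).
  { apply RInt_ge_0; auto. apply exR; auto. intros; apply c_sq; apply Dc_cont; auto.
    intros; apply pow2_ge_0. }
  destruct (Req_dec A 0) as [|HA]; auto.
  assert (HAp : 0 < Rabs A) by (apply Rabs_pos_lt; auto).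
  set (eta := Rabs A / (2 * (b - a) * Bp)).
  assert (Heta : 0 < eta) by (apply Rdiv_lt_0_compat; [lra|]; apply Rmult_lt_0_compat; lra).
  destruct (UC a b g u0 Hab' Hg Hu eta Heta) as [d [Hd HUC]].
  set (tau0 := Rmin (d / Bp) (eps0 / (Bp + Bd))).
  assert (Ht0 : 0 < tau0) by (apply Rmin_pos; apply Rdiv_lt_0_compat; lra).
  set (F := fun t => Phi a b K g (fun x => u0 x + t * phi x) - Phi a b K g u0).
  apply (zero_lemma A Q tau0 F Ht0 HQ).
  -
    intros t Ht. unfold F. cut (Phi a b K g u0 <= Phi a b K g (fun x => u0 x + t * phi x)). lra.
    apply Hw.
    + split. apply C1_plus; auto. apply C1_scal; auto.
      split; intros HD. rewrite (Hpa HD). ring. rewrite (Hpb HD). ring.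
    + exists (Rabs t * Bp), (Rabs t * Bd). split; [|split].
      * assert (Rabs t < eps0 / (Bp + Bd)) by (eapply Rlt_le_trans; [exact Ht|apply Rmin_r]).
        apply Rmult_lt_compat_r with (r := Bp + Bd) in H; [|lra].
        replace (eps0 / (Bp + Bd) * (Bp + Bd)) with eps0 in H by (field; lra). lra.
      * intros x Hx. replace (u0 x + t * phi x - u0 x) with (t * phi x) by ring.
        rewrite Rabs_mult. apply Rmult_le_compat_l. apply Rabs_pos. auto.
      * intros x Hx. rewrite <- (Dc_id a b _ x Hx), <- (Dc_id a b u0 x Hx).
        rewrite Dc_plus_scal; auto.
        replace (Dc a b u0 x + t * Dc a b phi x - Dc a b u0 x) with (t * Dc a b phi x) by ring.
        rewrite Rabs_mult. apply Rmult_le_compat_l. apply Rabs_pos. auto.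
  - intros t Ht. unfold F.
    rewrite !(Phi_c a b K g) by auto.
    set (f1 := fun x => 2 * (Dc a b u0 x - K) * Dc a b phi x + Derive g (u0 x) * phi x).
    set (f2 := fun x => Dc a b phi x ^ 2).
    set (Rt := fun x => g (u0 x + t * phi x) - g (u0 x) - t * (Derive g (u0 x) * phi x)).
    assert (Hc1 : forall x, a <= x <= b -> continuous f1 x).
    { intros x Hx. unfold f1. apply c_plus. apply c_mult. apply c_mult. apply c_const.
      apply c_minus. apply Dc_cont; auto. apply c_const. apply Dc_cont; auto.
      apply c_mult. apply (c_comp u0 (Derive g)). apply (C1_cont a b); auto. apply cg'; auto.
      apply (C1_cont a b); auto. }
    assert (Hc2 : forall x, a <= x <= b -> continuous f2 x).
    { intros x Hx. unfold f2. apply c_sq. apply Dc_cont; auto. }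
    assert (HcR : forall x, a <= x <= b -> continuous Rt x).
    { intros x Hx. unfold Rt. apply c_minus. apply c_minus.
      apply (c_comp (fun y => u0 y + t * phi y) g). apply c_plus. apply (C1_cont a b); auto.
      apply c_mult. apply c_const. apply (C1_cont a b); auto. apply cg; auto.
      apply (c_comp u0 g). apply (C1_cont a b); auto. apply cg; auto.
      apply c_mult. apply c_const. apply c_mult. apply (c_comp u0 (Derive g)).
      apply (C1_cont a b); auto. apply cg'; auto. apply (C1_cont a b); auto. }
    assert (Hc0 : forall x, a <= x <= b -> continuous (fun x => (Dc a b u0 x - K) ^ 2 + g (u0 x)) x).
    { intros x Hx. apply c_plus. apply c_sq. apply c_minus. apply Dc_cont; auto. apply c_const.
      apply (c_comp u0 g). apply (C1_cont a b); auto. apply cg; auto. }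
    assert (Hct : forall x, a <= x <= b -> continuous (fun x => (Dc a b (fun y => u0 y + t * phi y) x - K) ^ 2 + g (u0 x + t * phi x)) x).
    { intros x Hx. apply c_plus. apply c_sq. apply c_minus. apply Dc_cont; auto.
      apply C1_plus; auto. apply C1_scal; auto. apply c_const.
      apply (c_comp (fun y => u0 y + t * phi y) g). apply c_plus. apply (C1_cont a b); auto.
      apply c_mult. apply c_const. apply (C1_cont a b); auto. apply cg; auto. }
    rewrite <- RI_minus by (apply exR; auto).
    rewrite (RI_ext _ (fun x => t * f1 x + (t^2 * f2 x + Rt x))) by
      (auto; intros x Hx; rewrite Dc_plus_scal by auto; unfold f1, f2, Rt; ring).
    assert (E1 : ex_RInt f1 a b) by (apply exR; auto).
    assert (E2 : ex_RInt f2 a b) by (apply exR; auto).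
    assert (ER : ex_RInt Rt a b) by (apply exR; auto).
    assert (E1' : ex_RInt (fun x => t * f1 x) a b).
    { apply exR; auto. intros; apply c_mult; [apply c_const| auto]. }
    assert (E2' : ex_RInt (fun x => t^2 * f2 x + Rt x) a b).
    { apply exR; auto. intros; apply c_plus; [apply c_mult; [apply c_const| auto]| auto]. }
    rewrite (RI_plus _ _ a b E1' E2'), (RI_scal _ a b t E1).
    assert (E3 : ex_RInt (fun x => t^2 * f2 x) a b).
    { apply exR; auto. intros; apply c_mult; [apply c_const| auto]. }
    rewrite (RI_plus _ _ a b E3 ER).
    rewrite (RI_scal _ a b _ E2).
    fold A. fold Q.
    assert (HRb : Rabs (RInt Rt a b) <= (b - a) * (Rabs t * Bp * eta)).
    { apply abs_RInt_le_const; auto. intros x Hx. unfold Rt.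
      replace (t * (Derive g (u0 x) * phi x)) with (Derive g (u0 x) * (u0 x + t * phi x - u0 x)) by ring.
      assert (Htd : Rabs t * Bp <= d).
      { assert (Rabs t < d / Bp) by (eapply Rlt_le_trans; [exact Ht|apply Rmin_l]).
        apply Rmult_lt_compat_r with (r := Bp) in H; [|lra].
        replace (d / Bp * Bp) with d in H by (field; lra). lra. }
      assert (Hb : Rabs (u0 x + t * phi x - u0 x) <= Rabs t * Bp).
      { replace (u0 x + t * phi x - u0 x) with (t * phi x) by ring.
        rewrite Rabs_mult. apply Rmult_le_compat_l. apply Rabs_pos. auto. }
      eapply Rle_trans. apply (taylor g eta (u0 x) _ _ d Hg).
      intros z Hz. apply HUC; auto.
      lra. rewrite Rminus_diag, Rabs_R0; lra.
      rewrite Rmult_comm. apply Rmult_le_compat_r. lra. replace (u0 x + t * phi x - u0 x - 0) with (u0 x + t * phi x - u0 x) by ring. lra. }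
    assert (Hrb2 : (b - a) * (Rabs t * Bp * eta) = Rabs t * (Rabs A / 2)).
    { unfold eta. field. lra. }
    revert HRb. rewrite Hrb2. intros HRb.
    apply Rabs_le_between in HRb. change (RInt f1 a b) with A. change (RInt f2 a b) with Q. lra.
Qed.

Definition clipT (T p : R) := Rmax (- T) (Rmin T p).
Definition thT (T p : R) := Rmax 0 (Rmin 1 (3 - 4 * Rabs p / T)).

Lemma clip_bnd T p : 0 < T -> Rabs (clipT T p) <= T.
Proof. intros. unfold clipT, Rmax, Rmin. repeat destruct Rle_dec; unfold Rabs; repeat destruct Rcase_abs; lra. Qed.

Lemma th_bnd T p : 0 < T -> 0 <= thT T p <= 1.
Proof. intros. unfold thT, Rmax, Rmin. repeat destruct Rle_dec; lra. Qed.

Lemma clip_lip T p q : 0 < T -> Rabs (clipT T p - clipT T q) <= 1 * Rabs (p - q).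
Proof. intros. rewrite Rmult_1_l. unfold clipT, Rmax, Rmin. repeat destruct Rle_dec; unfold Rabs; repeat destruct Rcase_abs; lra. Qed.

Lemma th_lip T p q : 0 < T -> Rabs (thT T p - thT T q) <= (4 / T) * Rabs (p - q).
Proof.
  intros HT. unfold thT.
  assert (H : Rabs ((3 - 4 * Rabs p / T) - (3 - 4 * Rabs q / T)) <= 4 / T * Rabs (p - q)).
  { replace ((3 - 4 * Rabs p / T) - (3 - 4 * Rabs q / T)) with ((4 / T) * (Rabs q - Rabs p)) by (field; lra).
    rewrite Rabs_mult. rewrite (Rabs_pos_eq (4/T)) by (apply Rlt_le, Rdiv_lt_0_compat; lra).
    apply Rmult_le_compat_l. apply Rlt_le, Rdiv_lt_0_compat; lra.
    rewrite Rabs_minus_sym. apply Rabs_triang_inv2. }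
  revert H. generalize (3 - 4 * Rabs p / T) (3 - 4 * Rabs q / T) (4 / T * Rabs (p - q)).
  intros x y c. unfold Rmax, Rmin. repeat destruct Rle_dec; unfold Rabs; repeat destruct Rcase_abs; lra.
Qed.

Lemma clip_exc T p : 0 < T -> Rabs (p - clipT T p) <= p ^ 2 / (4 * T).
Proof.
  intros HT. apply Rmult_le_reg_r with (4 * T). lra.
  replace (p ^ 2 / (4 * T) * (4 * T)) with (p ^ 2) by (field; lra).
  pose proof (pow2_ge_0 (p - 2*T)). pose proof (pow2_ge_0 (p + 2*T)). simpl in *.
  unfold clipT, Rmax, Rmin. repeat destruct Rle_dec; unfold Rabs; repeat destruct Rcase_abs; nra.
Qed.

Lemma th_low T p : 0 < T -> 1 - 4 * p ^ 2 / T ^ 2 <= thT T p.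
Proof.
  intros HT. unfold thT.
  assert (0 <= 4 * p ^ 2 / T ^ 2) by (apply Rmult_le_pos; [nra| apply Rlt_le, Rinv_0_lt_compat; nra]).
  destruct (Rle_dec (Rabs p) (T/2)).
  - assert (3 - 4 * Rabs p / T >= 1).
    { apply Rle_ge. apply Rmult_le_reg_r with T; auto.
      replace ((3 - 4 * Rabs p / T) * T) with (3 * T - 4 * Rabs p) by (field; lra). lra. }
    unfold Rmax, Rmin. repeat destruct Rle_dec; lra.
  - assert (1 <= 4 * p ^ 2 / T ^ 2).
    { apply Rmult_le_reg_r with (T^2). nra.
      replace (4 * p ^ 2 / T ^ 2 * T ^ 2) with (4 * p^2) by (field; lra).
      assert (p ^ 2 = Rabs p ^ 2) by (simpl; rewrite !Rmult_1_r; rewrite <- Rabs_mult; rewrite Rabs_pos_eq; nra).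
      rewrite H0. nra. }
    pose proof (th_bnd T p HT). unfold thT in H1. lra.
Qed.

Lemma energy T p mu : 0 < T ->
  2 * T * Rabs (p - clipT T p) - 3 / 2 * T * Rabs mu * thT T p - mu ^ 2 * thT T p
  <= p ^ 2 - (clipT T p + mu * thT T p) ^ 2.
Proof.
  intros HT. pose proof (th_bnd T p HT) as [H0 H1].
  destruct (Req_dec (thT T p) 0) as [E|E].
  - rewrite E. unfold clipT, Rmax, Rmin. repeat destruct Rle_dec; unfold Rabs; repeat destruct Rcase_abs; nra.
  - assert (Hp : Rabs p < 3 * T / 4).
    { unfold thT in E. revert E. unfold Rmax, Rmin. repeat destruct Rle_dec; intros; try lra.
      all: assert (4 * Rabs p / T < 3) by lra; apply Rmult_lt_compat_r with (r := T) in H; auto;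
      replace (4 * Rabs p / T * T) with (4 * Rabs p) in H by (field; lra); lra. }
    assert (Hc : clipT T p = p).
    { unfold clipT, Rmax, Rmin. revert Hp. repeat destruct Rle_dec; unfold Rabs; repeat destruct Rcase_abs; intros; lra. }
    rewrite Hc. rewrite Rminus_diag, Rabs_R0.
    set (t := thT T p) in *.
    assert (mu * t * p <= Rabs mu * t * (3 * T / 4)).
    { rewrite (Rmult_comm mu t), Rmult_assoc, (Rmult_comm (Rabs mu) t), Rmult_assoc.
      apply Rmult_le_compat_l; auto.
      apply Rle_trans with (Rabs (mu * p)). apply Rle_abs. rewrite Rabs_mult.
      apply Rmult_le_compat_l. apply Rabs_pos. lra. }
    assert (mu ^ 2 * t ^ 2 <= mu ^ 2 * t). { assert (0 <= mu^2) by nra. simpl. nra. }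
    nra.
Qed.

Lemma FTC_h a b v u0 y : a <= y <= b -> C1_on a b v -> C1_on a b u0 ->
  RInt (fun x => Dc a b v x - Dc a b u0 x) a y = (v y - u0 y) - (v a - u0 a).
Proof.
  intros Hy Hv Hu.
  assert (Hab : a <= b) by lra.
  apply is_RInt_unique.
  apply (is_RInt_derive (V:=R_CompleteNormedModule) (fun x => v x - u0 x)).
  - intros x Hx. rewrite Rmin_left, Rmax_right in Hx by lra.
    assert (Hx' : a <= x <= b) by lra.
    rewrite !Dc_id by auto.
    apply (is_derive_minus v u0); apply Derive_correct; [apply (proj1 Hv)| apply (proj1 Hu)]; auto.
  - intros x _. apply c_minus; apply Dc_cont; auto.
Qed.

Lemma exR_gen (f : R -> R) a b : (forall x, continuous f x) -> ex_RInt f a b.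
Proof. intros H. apply (ex_RInt_continuous (V:=R_CompleteNormedModule)). intros; auto. Qed.

Lemma deriv_prim (f : R -> R) a c x : (forall y, continuous f y) ->
  is_derive (fun y => c + RInt f a y) x (f x).
Proof.
  intros Hf.
  assert (H : is_derive (fun y => RInt f a y) x (f x)).
  { apply (is_derive_RInt (V:=R_CompleteNormedModule) f (fun y => RInt f a y) a x).
    - apply filter_forall. intros y. apply (RInt_correct (V:=R_CompleteNormedModule)). apply exR_gen; auto.
    - auto. }
  pose proof (is_derive_plus (fun _ => c) (fun y => RInt f a y) x 0 (f x) (is_derive_const c x) H) as H2.
  eapply is_derive_ext. 2: { replace (f x) with (plus 0 (f x)). exact H2. change (0 + f x = f x). ring. }
  intros; reflexivity.
Qed.

Lemma cgc g (f : R -> R) x : C1_R g -> continuous f x -> continuous (fun y => g (f y)) x.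
Proof. intros Hg Hf. apply (c_comp f g); auto. apply cg; auto. Qed.
Lemma cgc' g (f : R -> R) x : C1_R g -> continuous f x -> continuous (fun y => Derive g (f y)) x.
Proof. intros Hg Hf. apply (c_comp f (Derive g)); auto. apply cg'; auto. Qed.

Theorem proposition2p3 (a b K : R) (g u0 : R -> R) (Da Db : bool) :
  a < b -> C1_R g -> C1_on a b u0 ->
  weak_minimizer a b K g Da Db u0 u0 ->
  strong_minimizer a b K g Da Db u0 u0.
Proof.
  intros Hab Hg Hu [HM [e0 [He0 Hw]]].
  assert (Hab' : a <= b) by lra.
  split; [exact HM|].
  set (T := e0 / 4). assert (HT : 0 < T) by (unfold T; lra).
  set (L := b - a). assert (HL : 0 < L) by (unfold L; lra).
  set (eta := T / (8 * L)). assert (Heta : 0 < eta) by (unfold eta; apply Rdiv_lt_0_compat; lra).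
  assert (HetaL : L * eta = T / 8) by (unfold eta; field; lra).
  destruct (UC a b g u0 Hab' Hg Hu eta Heta) as [d [Hd HUC]].
  set (s := Rmin (d/2) (Rmin (T/2) (L*T))).
  assert (Hs1 : s <= d/2) by apply Rmin_l.
  assert (Hs2 : s <= T/2) by (eapply Rle_trans; [apply Rmin_r| apply Rmin_l]).
  assert (Hs3 : s <= L*T) by (eapply Rle_trans; [apply Rmin_r| apply Rmin_r]).
  assert (Hs : 0 < s) by (apply Rmin_pos; [lra| apply Rmin_pos; nra]).
  exists s. split; auto.
  intros v Hv [m [Hm Hvm]].
  pose proof Hv as [Hvc [HvA HvB]].
  assert (Hm0 : 0 <= m) by (specialize (Hvm a (conj (Rle_refl a) Hab')); pose proof (Rabs_pos (v a - u0 a)); lra).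
  set (h := fun x => v x - u0 x).
  assert (Hh : C1_on a b h) by (apply C1_minus; auto).
  set (psi := fun x => Dc a b v x - Dc a b u0 x).
  assert (Hpc : forall x, continuous psi x) by (intros; apply c_minus; apply Dc_cont; auto).
  assert (Dch : forall x, Dc a b h x = psi x).
  { intros x. unfold Dc, psi, h. apply (D_minus a b v u0); auto. apply clamp_in; auto. }
  assert (FVh := FV a b K g u0 Da Db e0 Hab Hg Hu He0 Hw h Hh).
  assert (FVh' : RInt (fun x => 2 * (Dc a b u0 x - K) * Dc a b h x + Derive g (u0 x) * h x) a b = 0).
  { apply FVh; intros HD; unfold h. rewrite (HvA HD); ring. rewrite (HvB HD); ring. }
  clear FVh.
  set (G1 := fun x => g (v x) - g (u0 x) - Derive g (u0 x) * h x).
  set (P := RInt (fun x => psi x ^ 2) a b).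
  assert (Hcv : forall x, a <= x <= b -> continuous v x) by (intros; apply (C1_cont a b); auto).
  assert (Hcu : forall x, a <= x <= b -> continuous u0 x) by (intros; apply (C1_cont a b); auto).
  assert (Hch : forall x, a <= x <= b -> continuous h x) by (intros; apply (C1_cont a b); auto).
  assert (Hfv : forall x, a <= x <= b -> continuous (fun x => (Dc a b v x - K) ^ 2 + g (v x)) x).
  { intros. apply c_plus. apply c_sq, c_minus. apply Dc_cont; auto. apply c_const. apply cgc; auto. }
  assert (Hfu : forall x, a <= x <= b -> continuous (fun x => (Dc a b u0 x - K) ^ 2 + g (u0 x)) x).
  { intros. apply c_plus. apply c_sq, c_minus. apply Dc_cont; auto. apply c_const. apply cgc; auto. }
  assert (HcG1 : forall x, a <= x <= b -> continuous G1 x).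
  { intros. unfold G1. apply c_minus. apply c_minus; apply cgc; auto. apply c_mult; auto. apply cgc'; auto. }
  assert (Id1 : Phi a b K g v - Phi a b K g u0 = P + RInt G1 a b).
  { rewrite !(Phi_c a b K g) by auto.
    rewrite <- RI_minus by (apply exR; auto).
    rewrite (RI_ext _ (fun x => (2 * (Dc a b u0 x - K) * Dc a b h x + Derive g (u0 x) * h x) + (psi x ^ 2 + G1 x))) by
      (auto; intros x Hx; rewrite Dch; unfold G1, psi, h; ring).
    rewrite RI_plus. rewrite FVh'. rewrite RI_plus. unfold P. ring.
    apply exR_gen. intros; apply c_sq; auto. apply exR; auto.
    apply exR; auto. intros. apply c_plus. apply c_mult. apply c_mult. apply c_const. apply c_minus.
    apply Dc_cont; auto. apply c_const. apply Dc_cont; auto. apply c_mult. apply cgc'; auto. auto.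
    apply exR; auto. intros. apply c_plus. apply c_sq; auto. auto. }
  assert (Hhm : forall x, a <= x <= b -> Rabs (h x) <= m) by (intros; unfold h; auto).
  assert (HG1 : forall x, a <= x <= b -> Rabs (G1 x) <= eta * s).
  { intros x Hx. unfold G1, h.
    eapply Rle_trans. apply (taylor g eta (u0 x) (v x) (u0 x) d Hg).
    intros z Hz. apply HUC; auto. specialize (Hhm x Hx). unfold h in Hhm. lra.
    rewrite Rminus_diag, Rabs_R0; lra.
    apply Rmult_le_compat_l. lra. specialize (Hhm x Hx). unfold h in Hhm. lra. }
  destruct (Rle_lt_dec (eta * s * L) P) as [CaseA|CaseB].
  { assert (Rabs (RInt G1 a b) <= (b - a) * (eta * s)).
    { apply abs_RInt_le_const; auto. apply exR; auto. }
    apply Rabs_le_between in H. fold L in H. nra. }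
  set (Cp := fun x => clipT T (psi x)).
  set (Tp := fun x => thT T (psi x)).
  assert (HcCp : forall x, continuous Cp x).
  { intros x. unfold Cp. apply (c_comp psi (clipT T)); auto. apply (cont_lip _ _ 1). lra.
    intros; apply clip_lip; auto. }
  assert (HcTp : forall x, continuous Tp x).
  { intros x. unfold Tp. apply (c_comp psi (thT T)); auto. apply (cont_lip _ _ (4/T)).
    apply Rdiv_lt_0_compat; lra. intros; apply th_lip; auto. }
  set (E := RInt (fun x => Rabs (psi x - Cp x)) a b).
  set (lam := RInt (fun x => psi x - Cp x) a b).
  set (Th := RInt Tp a b).
  set (mu := lam / Th).
  set (psit := fun x => Cp x + mu * Tp x).
  assert (Hcpt : forall x, continuous psit x).
  { intros. unfold psit. apply c_plus; auto. apply c_mult; auto. apply c_const. }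
  assert (ExE : forall y z, ex_RInt (fun x => Rabs (psi x - Cp x)) y z).
  { intros. apply exR_gen. intros. apply c_abs, c_minus; auto. }
  assert (ExL : forall y z, ex_RInt (fun x => psi x - Cp x) y z).
  { intros. apply exR_gen. intros. apply c_minus; auto. }
  assert (ExT : forall y z, ex_RInt Tp y z) by (intros; apply exR_gen; auto).
  assert (ExC : forall y z, ex_RInt Cp y z) by (intros; apply exR_gen; auto).
  assert (ExP : forall y z, ex_RInt psi y z) by (intros; apply exR_gen; auto).
  assert (ExPt : forall y z, ex_RInt psit y z) by (intros; apply exR_gen; auto).
  assert (ExMT : forall y z c, ex_RInt (fun x => c * Tp x) y z).
  { intros; apply exR_gen; intros; apply c_mult; auto; apply c_const. }
  assert (ExP2 : forall y z, ex_RInt (fun x => psi x ^ 2) y z).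
  { intros; apply exR_gen. intros; apply c_sq; auto. }
  assert (HE0 : 0 <= E).
  { apply RInt_ge_0; auto. intros; apply Rabs_pos. }
  assert (HEP : E <= / (4 * T) * P).
  { unfold P. rewrite <- RI_scal by auto. apply RI_le; auto.
    apply exR_gen. intros; apply c_mult. apply c_const. apply c_sq; auto.
    intros x Hx. unfold Cp. eapply Rle_trans. apply clip_exc; auto. unfold Rdiv. rewrite Rmult_comm. lra. }
  assert (HEs : E < s / 32).
  { assert (/ (4 * T) * P < / (4 * T) * (eta * s * L)).
    { apply Rmult_lt_compat_l; auto. apply Rinv_0_lt_compat; lra. }
    replace (/ (4 * T) * (eta * s * L)) with (s / 32) in H by (unfold eta; field; lra). lra. }
  assert (Hlam : Rabs lam <= E) by (apply RI_abs_le; auto).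
  assert (HTh : L - 4 / T ^ 2 * P <= Th).
  { unfold P, L. rewrite <- RI_scal by auto. rewrite <- (Rmult_1_r (b - a)), <- (RI_const a b 1).
    rewrite <- RI_minus. apply RI_le; auto.
    apply exR_gen; intros. apply c_minus. apply c_const. apply c_mult. apply c_const. apply c_sq; auto.
    intros x Hx. unfold Tp. eapply Rle_trans. 2: apply th_low; auto. unfold Rdiv. lra.
    apply exR_gen; intros; apply c_const.
    apply exR_gen. intros; apply c_mult. apply c_const. apply c_sq; auto. }
  assert (HTh2 : L / 2 < Th).
  { assert (4 / T ^ 2 * P < 4 / T ^ 2 * (eta * s * L)).
    { apply Rmult_lt_compat_l; auto. apply Rdiv_lt_0_compat; nra. }
    replace (4 / T ^ 2 * (eta * s * L)) with (s / (2 * T)) in H by (unfold eta; field; lra).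
    assert (s / (2 * T) <= L / 2).
    { apply Rmult_le_reg_r with (2 * T). lra.
      replace (s / (2 * T) * (2 * T)) with s by (field; lra). nra. }
    lra. }
  assert (HmuTh : mu * Th = lam) by (unfold mu; field; lra).
  assert (Hmu : Rabs mu <= 2 * E / L).
  { unfold mu. unfold Rdiv. rewrite Rabs_mult, Rabs_inv, (Rabs_pos_eq Th) by lra.
    apply Rmult_le_reg_r with Th. lra.
    rewrite Rmult_assoc, Rinv_l, Rmult_1_r by lra.
    apply Rle_trans with E; auto.
    replace (2 * E * / L * Th) with (E * (2 * Th / L)) by (field; lra).
    rewrite <- (Rmult_1_r E) at 1. apply Rmult_le_compat_l; auto.
    apply Rmult_le_reg_r with L; auto. replace (2 * Th / L * L) with (2 * Th) by (field; lra). lra. }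
  assert (HEL : 2 * E / L <= T / 16).
  { apply Rmult_le_reg_r with L; auto. replace (2 * E / L * L) with (2 * E) by (field; lra). nra. }
  set (k := fun x => h a + RInt psit a x).
  set (v2 := fun x => u0 x + k x).
  assert (HFT : forall y, a <= y <= b -> RInt psi a y = h y - h a).
  { intros y Hy. unfold psi, h. apply FTC_h; auto. }
  assert (Hint : RInt psit a b = RInt psi a b).
  { unfold psit. rewrite RI_plus, RI_scal; auto. fold Th. rewrite HmuTh. unfold lam.
    rewrite RI_minus; auto. apply Rplus_minus. }
  assert (Hka : k a = h a) by (unfold k; rewrite RInt_point; change (h a + 0 = h a); ring).
  assert (Hkb : k b = h b) by (unfold k; rewrite Hint, HFT by lra; ring).
  assert (Hderk : forall x, is_derive k x (psit x)) by (intros; apply deriv_prim; auto).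
  assert (HC1k : C1_on a b k) by (apply (C1_glob a b k psit); auto).
  assert (HC1v2 : C1_on a b v2) by (apply C1_plus; auto).
  assert (HDv2 : forall x, a <= x <= b -> Derive v2 x = Derive u0 x + psit x).
  { intros x Hx. unfold v2. rewrite (D_plus a b u0 k) by auto. f_equal. apply is_derive_unique; auto. }
  assert (Hv2M : in_M a b Da Db u0 v2).
  { split; auto. split; intros HD; unfold v2.
    rewrite Hka. unfold h. rewrite (HvA HD). ring. rewrite Hkb. unfold h. rewrite (HvB HD). ring. }
  assert (Hkh : forall x, a <= x <= b -> Rabs (k x - h x) <= 2 * E).
  { intros x Hx.
    assert (Ek : k x - h x = RInt (fun y => psit y - psi y) a x).
    { rewrite RI_minus by auto. rewrite HFT by auto. unfold k. ring. }
    rewrite Ek. eapply Rle_trans. apply RI_abs_le. lra. apply exR_gen; intros; apply c_minus; auto.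
    apply Rle_trans with (RInt (fun y => Rabs (psi y - Cp y) + Rabs mu * Tp y) a x).
    { apply RI_le. lra. apply exR_gen; intros; apply c_abs, c_minus; auto.
      apply exR_gen; intros; apply c_plus. apply c_abs, c_minus; auto. apply c_mult; auto. apply c_const.
      intros y Hy. unfold psit. replace (Cp y + mu * Tp y - psi y) with (- (psi y - Cp y) + mu * Tp y) by ring.
      eapply Rle_trans. apply Rabs_triang. rewrite Rabs_Ropp, Rabs_mult, (Rabs_pos_eq (Tp y)). lra.
      apply th_bnd; auto. }
    eapply Rle_trans. apply (RI_upper _ a x b); auto.
    apply exR_gen; intros; apply c_plus. apply c_abs, c_minus; auto. apply c_mult; auto. apply c_const.
    intros y Hy. apply Rplus_le_le_0_compat. apply Rabs_pos. apply Rmult_le_pos. apply Rabs_pos. apply th_bnd; auto.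
    rewrite RI_plus, RI_scal; auto. fold E. fold Th.
    replace (Rabs mu * Th) with (Rabs lam). lra.
    rewrite <- HmuTh, Rabs_mult, (Rabs_pos_eq Th); lra. }
  assert (Hpt : forall x, Rabs (psit x) <= T + 2 * E / L).
  { intros x. unfold psit. eapply Rle_trans. apply Rabs_triang. rewrite Rabs_mult.
    pose proof (clip_bnd T (psi x) HT). pose proof (th_bnd T (psi x) HT).
    unfold Cp, Tp. rewrite (Rabs_pos_eq (thT T (psi x))) by lra.
    assert (Rabs mu * thT T (psi x) <= Rabs mu) by (pose proof (Rabs_pos mu); nra). lra. }
  assert (Hw2 : Phi a b K g u0 <= Phi a b K g v2).
  { apply Hw; auto. exists (m + 2 * E), (T + 2 * E / L). split; [|split].
    - unfold T in *. lra.
    - intros x Hx. unfold v2. replace (u0 x + k x - u0 x) with (h x + (k x - h x)) by ring.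
      eapply Rle_trans. apply Rabs_triang. specialize (Hkh x Hx). specialize (Hhm x Hx). lra.
    - intros x Hx. rewrite HDv2 by auto. replace (Derive u0 x + psit x - Derive u0 x) with (psit x) by ring. auto. }
  set (phi2 := fun x => v x - v2 x).
  assert (Hphi2 : C1_on a b phi2) by (apply C1_minus; auto).
  assert (FV2 : RInt (fun x => 2 * (Dc a b u0 x - K) * Dc a b phi2 x + Derive g (u0 x) * phi2 x) a b = 0).
  { apply (FV a b K g u0 Da Db e0 Hab Hg Hu He0 Hw phi2 Hphi2); intros _; unfold phi2, v2.
    rewrite Hka; unfold h; ring. rewrite Hkb; unfold h; ring. }
  assert (Dcphi2 : forall x, a <= x <= b -> Dc a b phi2 x = psi x - psit x).
  { intros x Hx. rewrite Dc_id by auto. unfold phi2. rewrite (D_minus a b v v2) by auto.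
    rewrite HDv2 by auto. unfold psi. rewrite !Dc_id by auto. ring. }
  assert (Dcv2 : forall x, a <= x <= b -> Dc a b v2 x = Dc a b u0 x + psit x).
  { intros x Hx. rewrite !Dc_id by auto. auto. }
  set (G2 := fun x => g (v x) - g (v2 x) - Derive g (u0 x) * phi2 x).
  assert (Hcv2 : forall x, a <= x <= b -> continuous v2 x) by (intros; apply (C1_cont a b); auto).
  assert (Hcphi2 : forall x, a <= x <= b -> continuous phi2 x) by (intros; apply (C1_cont a b); auto).
  assert (HcG2 : forall x, a <= x <= b -> continuous G2 x).
  { intros. unfold G2. apply c_minus. apply c_minus; apply cgc; auto. apply c_mult; auto. apply cgc'; auto. }
  assert (Hfv2 : forall x, a <= x <= b -> continuous (fun x => (Dc a b v2 x - K) ^ 2 + g (v2 x)) x).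
  { intros. apply c_plus. apply c_sq, c_minus. apply Dc_cont; auto. apply c_const. apply cgc; auto. }
  assert (Id2 : Phi a b K g v - Phi a b K g v2 =
     RInt (fun x => psi x ^ 2 - psit x ^ 2) a b + RInt G2 a b).
  { rewrite !(Phi_c a b K g) by auto.
    rewrite <- RI_minus by (apply exR; auto).
    rewrite (RI_ext _ (fun x => (2 * (Dc a b u0 x - K) * Dc a b phi2 x + Derive g (u0 x) * phi2 x) + ((psi x ^ 2 - psit x ^ 2) + G2 x))) by
      (auto; intros x Hx; rewrite Dcphi2, Dcv2 by auto; unfold G2, psi, phi2; ring).
    rewrite RI_plus. rewrite FV2. rewrite RI_plus. ring.
    apply exR_gen. intros; apply c_minus; apply c_sq; auto. apply exR; auto.
    apply exR; auto. intros. apply c_plus. apply c_mult. apply c_mult. apply c_const. apply c_minus.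
    apply Dc_cont; auto. apply c_const. apply Dc_cont; auto. apply c_mult. apply cgc'; auto. auto.
    apply exR; auto. intros. apply c_plus. apply c_minus; apply c_sq; auto. auto. }
  assert (Hen : 2 * T * E - 3 / 2 * T * Rabs mu * Th - mu ^ 2 * Th <= RInt (fun x => psi x ^ 2 - psit x ^ 2) a b).
  { unfold E, Th. rewrite <- !RI_scal by auto. rewrite <- !RI_minus.
    apply RI_le; auto.
    - apply exR_gen; intros. apply c_minus. apply c_minus. apply c_mult. apply c_const. apply c_abs, c_minus; auto.
      apply c_mult; auto. apply c_const. apply c_mult; auto. apply c_const.
    - apply exR_gen; intros. apply c_minus; apply c_sq; auto.
    - intros x Hx. unfold psit, Cp, Tp. apply energy; auto.
    - apply exR_gen; intros. apply c_minus. apply c_mult. apply c_const. apply c_abs, c_minus; auto.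
      apply c_mult; auto. apply c_const.
    - auto.
    - apply exR_gen; intros. apply c_mult. apply c_const. apply c_abs, c_minus; auto.
    - auto. }
  assert (HG2 : Rabs (RInt G2 a b) <= (b - a) * (eta * (2 * E))).
  { apply abs_RInt_le_const; auto. apply exR; auto. intros x Hx. unfold G2, phi2.
    eapply Rle_trans. apply (taylor g eta (u0 x) (v x) (v2 x) d Hg).
    intros z Hz. apply HUC; auto.
    specialize (Hhm x Hx). unfold h in Hhm. lra.
    unfold v2. replace (u0 x + k x - u0 x) with (h x + (k x - h x)) by ring.
    eapply Rle_trans. apply Rabs_triang. specialize (Hkh x Hx). specialize (Hhm x Hx). lra.
    apply Rmult_le_compat_l. lra. unfold v2.
    replace (v x - (u0 x + k x)) with (- (k x - h x)) by (unfold h; ring). rewrite Rabs_Ropp. auto. }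
  apply Rabs_le_between in HG2. fold L in HG2.
  assert (X1 : Rabs mu * Th = Rabs lam) by (rewrite <- HmuTh, Rabs_mult, (Rabs_pos_eq Th); lra).
  assert (X2 : mu ^ 2 * Th <= T / 16 * E).
  { replace (mu ^ 2 * Th) with (Rabs mu * Rabs lam).
    apply Rmult_le_compat; try apply Rabs_pos; lra.
    rewrite <- X1. replace (mu ^ 2) with (Rabs mu * Rabs mu). ring.
    rewrite <- Rabs_mult. simpl. rewrite Rmult_1_r. apply Rabs_pos_eq. nra. }
  assert (X3 : 3 / 2 * T * Rabs mu * Th <= 3 / 2 * T * E).
  { rewrite Rmult_assoc, X1. apply Rmult_le_compat_l; lra. }
  assert (X4 : L * (eta * (2 * E)) = T / 4 * E) by (rewrite <- Rmult_assoc, HetaL; field).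
  lra.
Qed.
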